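(* For every term $t\in\Lambda^\infty$ there exists $s\in\Lambda^\infty$ with $t\to^\infty_N s$.
   Context: Fix an infinite set $V$ of variables and a set $C$ of constants with $V\cap C=\emptyset$, containing a distinguished constant $\bot$. $\Lambda^\infty$ is the set of infinitary lambda-terms: all finite and infinite terms generated coinductively by $t ::= c\mid x\mid t\,t\mid\lambda x.t$, identified up to $\alpha$-equivalence; $s[t/x]$ is capture-avoiding substitution; $\equiv$ is identity; an atom is a variable or constant. $\to_\beta$ is the compatible closure of $\{((\lambda x.s)t,s[t/x])\}$ (least relation containing these pairs and closed under $s\to s'\Rightarrow st\to s't, ts\to ts', \lambda x.s\to\lambda x.s'$), $\to^*_\beta$ its reflexive-transitive closure. A term is in head normal form (hnf) if it is $\lambda x_1\ldots x_m.\,a\,t_1\ldots t_n$ ($m,n\ge0$, $a$ an atom, $a\not\equiv\bot$); $t$ has a hnf if $t\to^*_\beta t'$ for some $t'$ in hnf. Weak head contraction $\to_w$ is the least relation with $(\lambda x.s)t\to_w s[t/x]$ and $s\to_w s'\Rightarrow st\to_w s't$; head contraction $\to_h$ is the least relation with $s\to_w s'\Rightarrow s\to_h s'$ and $s\to_h s'\Rightarrow\lambda x.s\to_h\lambda x.s'$; $\to^*_h$ is its reflexive-transitive closure. The relation $\to^\infty_N$ is the greatest relation such that whenever $t\to^\infty_N u$, either (i) $u\equiv\bot$ and $t$ has no hnf, or (ii) $u\equiv\lambda x_1\ldots x_n.\,a\,t_1'\ldots t_m'$ with $a$ an atom, $a\not\equiv\bot$, and there are $t_1,\ldots,t_m$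 with $t\to^*_h\lambda x_1\ldots x_n.\,a\,t_1\ldots t_m$ and $t_i\to^\infty_N t_i'$ for $i=1,\ldots,m$. *)

(* Defs.v *)
(* Infinitary lambda-terms, represented with de Bruijn indices
   (so alpha-equivalence classes are represented canonically). *)
From Stdlib Require Import List Relations Arith.
Import ListNotations.

Set Implicit Arguments.

Section InfLambda.

Variable C : Type.
Variable bot : C.

CoInductive term : Type :=
| Var : nat -> term
| Cst : C -> term
| App : term -> term -> term
| Lam : term -> term.

CoFixpoint lift (k : nat) (t : term) : term :=
  match t with
  | Var n => Var (if k <=? n then S n else n)
  | Cst c => Cst c
  | App t1 t2 => App (lift k t1) (lift k t2)
  | Lam t1 => Lam (lift (S k) t1)
  end.

Definition up (sigma : nat -> term) : nat -> term :=
  fun n => match n with 0 => Var 0 | S m => lift 0 (sigma m) end.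

CoFixpoint subst (sigma : nat -> term) (t : term) : term :=
  match t with
  | Var n => sigma n
  | Cst c => Cst c
  | App t1 t2 => App (subst sigma t1) (subst sigma t2)
  | Lam t1 => Lam (subst (up sigma) t1)
  end.

(* s[u/x] where x is the variable bound by the lambda, i.e. index 0 *)
Definition subst0 (u : term) (s : term) : term :=
  subst (fun n => match n with 0 => u | S m => Var m end) s.

Definition is_atom (a : term) : Prop :=
  match a with Var _ => True | Cst _ => True | _ => False end.

Fixpoint lams (n : nat) (t : term) : term :=
  match n with 0 => t | S m => Lam (lams m t) end.

Fixpoint apps (a : term) (ts : list term) : term :=
  match ts with [] => a | u :: us => apps (App a u) us end.

Inductive beta : term -> term -> Prop :=
| beta_redex s u : beta (App (Lam s) u) (subst0 u s)
| beta_appl s s' u : beta s s' -> beta (App s u) (App s' u)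
| beta_appr s u u' : beta u u' -> beta (App s u) (App s u')
| beta_lam s s' : beta s s' -> beta (Lam s) (Lam s').

Definition beta_star := clos_refl_trans term beta.

Inductive spine : term -> Prop :=
| spine_var n : spine (Var n)
| spine_cst c : c <> bot -> spine (Cst c)
| spine_app t u : spine t -> spine (App t u).

Inductive hnf : term -> Prop :=
| hnf_spine t : spine t -> hnf t
| hnf_lam t : hnf t -> hnf (Lam t).

Definition has_hnf (t : term) : Prop := exists t', beta_star t t' /\ hnf t'.

Inductive wstep : term -> term -> Prop :=
| wstep_redex s u : wstep (App (Lam s) u) (subst0 u s)
| wstep_app s s' u : wstep s s' -> wstep (App s u) (App s' u).

Inductive hstep : term -> term -> Prop :=
| hstep_w s s' : wstep s s' -> hstep s s'
| hstep_lam s s' : hstep s s' -> hstep (Lam s) (Lam s').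

Definition hstar := clos_refl_trans term hstep.

CoInductive infN : term -> term -> Prop :=
| infN_bot t : ~ has_hnf t -> infN t (Cst bot)
| infN_hnf t n a ts ts' :
    is_atom a -> a <> Cst bot ->
    hstar t (lams n (apps a ts)) ->
    length ts = length ts' ->
    (forall i, i < length ts -> infN (nth i ts (Cst bot)) (nth i ts' (Cst bot))) ->
    infN t (lams n (apps a ts')).

End InfLambda.

Arguments Var {C} _.
Arguments Cst {C} _.

(* Main.v *)
Require Import Defs.
From Stdlib Require Import List Relations Arith Lia ClassicalEpsilon.
Import ListNotations.
Set Implicit Arguments.

Section S.
Variable C : Type.
Notation term := (term C).
Implicit Types (a b x y u w t : term) (s r : nat -> term).

Definition frob (t : term) : term :=
  match t with Var n => Var n | Cst c => Cst c | App a b => App a b | Lam a => Lam a end.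
Lemma frob_eq t : t = frob t. Proof. destruct t; reflexivity. Qed.

Definition bump k n := if k <=? n then S n else n.

Lemma lift_var k n : lift k (@Var C n) = Var (bump k n).
Proof. rewrite (frob_eq (lift k (@Var C n))). reflexivity. Qed.
Lemma lift_cst k c : lift k (@Cst C c) = @Cst C c.
Proof. rewrite (frob_eq (lift k (@Cst C c))). reflexivity. Qed.
Lemma lift_app k a b : lift k (App a b) = App (lift k a) (lift k b).
Proof. rewrite (frob_eq (lift k (App a b))). reflexivity. Qed.
Lemma lift_lam k a : lift k (Lam a) = Lam (lift (S k) a).
Proof. rewrite (frob_eq (lift k (Lam a))). reflexivity. Qed.
Lemma subst_var s n : subst s (@Var C n) = s n.
Proof. rewrite (frob_eq (subst s (@Var C n))). simpl. destruct (s n); reflexivity. Qed.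
Lemma subst_cst s c : subst s (@Cst C c) = @Cst C c.
Proof. rewrite (frob_eq (subst s (@Cst C c))). reflexivity. Qed.
Lemma subst_app s a b : subst s (App a b) = App (subst s a) (subst s b).
Proof. rewrite (frob_eq (subst s (App a b))). reflexivity. Qed.
Lemma subst_lam s a : subst s (Lam a) = Lam (subst (up s) a).
Proof. rewrite (frob_eq (subst s (Lam a))). reflexivity. Qed.

CoInductive bis : term -> term -> Prop :=
| bis_var n : bis (Var n) (Var n)
| bis_cst c : bis (Cst c) (Cst c)
| bis_app a b a' b' : bis a a' -> bis b b' -> bis (App a b) (App a' b')
| bis_lam a a' : bis a a' -> bis (Lam a) (Lam a').

Lemma bis_refl : forall t, bis t t.
Proof. cofix H. intro t; destruct t; constructor; apply H. Qed.
Lemma bis_sym : forall a b, bis a b -> bis b a.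
Proof. cofix H. intros a b h; destruct h; constructor; apply H; assumption. Qed.
Lemma bis_trans : forall a b c, bis a b -> bis b c -> bis a c.
Proof.
  cofix H. intros a b c h1 h2; destruct h1; inversion h2; subst; constructor.
  - apply H with a'; assumption.
  - apply H with b'; assumption.
  - apply H with a'; assumption.
Qed.

Lemma bump_comm j k n : j <= k -> bump j (bump k n) = bump (S k) (bump j n).
Proof.
  intro h. unfold bump.
  destruct (Nat.leb_spec k n); destruct (Nat.leb_spec j n).
  - destruct (Nat.leb_spec j (S n)); destruct (Nat.leb_spec (S k) (S n)); lia.
  - lia.
  - destruct (Nat.leb_spec j n); destruct (Nat.leb_spec (S k) (S n)); lia.
  - destruct (Nat.leb_spec j n); destruct (Nat.leb_spec (S k) n); lia.
Qed.

Lemma lift_lift : forall x j k, j <= k -> bis (lift j (lift k x)) (lift (S k) (lift j x)).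
Proof.
  cofix H. intros x j k h. destruct x.
  - rewrite !lift_var, bump_comm by exact h. apply bis_refl.
  - rewrite !lift_cst. constructor.
  - rewrite !lift_app. constructor; apply H; exact h.
  - rewrite !lift_lam. constructor. apply H. lia.
Qed.

Lemma lift_resp : forall a b k, bis a b -> bis (lift k a) (lift k b).
Proof.
  cofix H. intros a b k h. destruct h.
  - apply bis_refl.
  - apply bis_refl.
  - rewrite !lift_app. constructor; apply H; assumption.
  - rewrite !lift_lam. constructor; apply H; assumption.
Qed.

Definition sbis (s s' : nat -> term) := forall n, bis (s n) (s' n).

Lemma up_resp s s' : sbis s s' -> sbis (up s) (up s').
Proof. intros h [|n]; simpl. apply bis_refl. apply lift_resp, h. Qed.

Lemma subst_resp : forall a b s s', bis a b -> sbis s s' -> bis (subst s a) (subst s' b).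
Proof.
  cofix H. intros a b s s' h hs. destruct h.
  - rewrite !subst_var. apply hs.
  - rewrite !subst_cst. constructor.
  - rewrite !subst_app. constructor; apply H; assumption.
  - rewrite !subst_lam. constructor; apply H; [assumption| apply up_resp; assumption].
Qed.

Lemma subst_lift : forall x k s s', (forall n, bis (s' (bump k n)) (lift k (s n))) ->
  bis (subst s' (lift k x)) (lift k (subst s x)).
Proof.
  cofix H. intros x k s s' h. destruct x.
  - rewrite lift_var, !subst_var. apply h.
  - rewrite lift_cst, !subst_cst, lift_cst. constructor.
  - rewrite lift_app, !subst_app, lift_app. constructor; apply H; assumption.
  - rewrite lift_lam, !subst_lam, lift_lam. constructor. apply H.
    intros [|n].
    + simpl. rewrite lift_var. apply bis_refl.
    + replace (bump (S k) (S n)) with (S (bump k n)) by (unfold bump; simpl; destruct (k <=? n); reflexivity).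
      simpl. eapply bis_trans. apply lift_resp, h. apply lift_lift. lia.
Qed.

Lemma subst_subst : forall x s (q : nat -> term) r, (forall n, bis (subst s (q n)) (r n)) ->
  bis (subst s (subst q x)) (subst r x).
Proof.
  cofix H. intros x s q r h. destruct x.
  - rewrite !subst_var. apply h.
  - rewrite !subst_cst. constructor.
  - rewrite !subst_app. constructor; apply H; assumption.
  - rewrite !subst_lam. constructor. apply H.
    intros [|n]; simpl.
    + rewrite subst_var. apply bis_refl.
    + eapply bis_trans. apply subst_lift with (s := s). intro m. apply bis_refl.
      apply lift_resp, h.
Qed.

Lemma subst_lift_cancel : forall x k s s', (forall n, bis (s (bump k n)) (s' n)) ->
  bis (subst s (lift k x)) (subst s' x).
Proof.
  cofix H. intros x k s s' h. destruct x.
  - rewrite lift_var, !subst_var. apply h.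
  - rewrite lift_cst, !subst_cst. constructor.
  - rewrite lift_app, !subst_app. constructor; apply H; assumption.
  - rewrite lift_lam, !subst_lam. constructor. apply H.
    intros [|n]; simpl. apply bis_refl.
    replace (bump (S k) (S n)) with (S (bump k n)) by (unfold bump; simpl; destruct (k <=? n); reflexivity).
    simpl. apply lift_resp, h.
Qed.

Lemma subst_id : forall x s, (forall n, bis (s n) (Var n)) -> bis (subst s x) x.
Proof.
  cofix H. intros x s h. destruct x.
  - rewrite !subst_var. apply h.
  - rewrite !subst_cst. constructor.
  - rewrite !subst_app. constructor; apply H; assumption.
  - rewrite !subst_lam. constructor. apply H.
    intros [|n]; simpl. apply bis_refl.
    eapply bis_trans. apply lift_resp, h. rewrite lift_var. apply bis_refl.
Qed.

Definition beta0 (u : term) := fun n => match n with 0 => u | S m => Var m end.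

Lemma subst_subst0 s u x :
  bis (subst s (subst0 u x)) (subst0 (subst s u) (subst (up s) x)).
Proof.
  unfold subst0.
  eapply bis_trans. apply subst_subst with (r := fun n => subst s (beta0 u n)).
  intro; apply bis_refl.
  apply bis_sym. eapply bis_trans. apply subst_subst with (r := fun n => subst (beta0 (subst s u)) (up s n)).
  intro; apply bis_refl.
  apply subst_resp. apply bis_refl.
  intros [|n]; simpl.
  - rewrite subst_var. apply bis_refl.
  - rewrite subst_var. eapply bis_trans.
    apply subst_lift_cancel with (s' := fun n => Var n). intro; apply bis_refl.
    apply subst_id. intro; apply bis_refl.
Qed.

Definition ren k := fun n => @Var C (bump k n).

Lemma lift_ren : forall x k s, (forall n, bis (s n) (ren k n)) -> bis (lift k x) (subst s x).
Proof.
  cofix H. intros x k s h. destruct x.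
  - rewrite lift_var, subst_var. apply bis_sym, h.
  - rewrite lift_cst, subst_cst. constructor.
  - rewrite lift_app, subst_app. constructor; apply H; assumption.
  - rewrite lift_lam, subst_lam. constructor. apply H.
    intros [|n]; simpl. apply bis_refl.
    eapply bis_trans. apply lift_resp, h. unfold ren. rewrite lift_var.
    replace (bump (S k) (S n)) with (bump 0 (bump k n)) by (unfold bump; simpl; destruct (k <=? n); reflexivity).
    apply bis_refl.
Qed.

Lemma lift_subst0 k u x : bis (lift k (subst0 u x)) (subst0 (lift k u) (lift (S k) x)).
Proof.
  eapply bis_trans. apply lift_ren with (s := ren k). intro; apply bis_refl.
  eapply bis_trans. apply subst_subst0.
  apply subst_resp.
  - apply bis_sym. apply lift_ren. intros [|n]; simpl. apply bis_refl.
    unfold ren. rewrite lift_var.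
    replace (bump (S k) (S n)) with (bump 0 (bump k n)) by (unfold bump; simpl; destruct (k <=? n); reflexivity).
    apply bis_refl.
  - intros [|n]; simpl. apply bis_sym, lift_ren. intro; apply bis_refl. apply bis_refl.
Qed.


Definition wb a b := wstep a b \/ bis a b.
Definition wstarB := clos_refl_trans term wb.

Lemma wstep_subst a b s : wstep a b -> exists c, wstep (subst s a) c /\ bis c (subst s b).
Proof.
  intro h. revert s. induction h; intro sg.
  - rewrite subst_app, subst_lam. eexists; split. constructor. apply bis_sym, subst_subst0.
  - destruct (IHh sg) as [c [h1 h2]]. rewrite !subst_app. eexists; split.
    apply wstep_app; eassumption. constructor. assumption. apply bis_refl.
Qed.

Lemma wstarB_subst a b s : wstarB a b -> wstarB (subst s a) (subst s b).
Proof.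
  induction 1.
  - destruct H as [H|H].
    + destruct (wstep_subst s H) as [c [h1 h2]].
      eapply rt_trans; apply rt_step; [left; exact h1| right; exact h2].
    + apply rt_step; right. apply subst_resp. assumption. intro; apply bis_refl.
  - apply rt_refl.
  - eapply rt_trans; eassumption.
Qed.

Lemma wstep_lift a b k : wstep a b -> exists c, wstep (lift k a) c /\ bis c (lift k b).
Proof.
  intro h. revert k. induction h; intro k.
  - rewrite lift_app, lift_lam. eexists; split. constructor. apply bis_sym, lift_subst0.
  - destruct (IHh k) as [c [h1 h2]]. rewrite !lift_app. eexists; split.
    apply wstep_app; eassumption. constructor. assumption. apply bis_refl.
Qed.

Lemma wstarB_lift a b k : wstarB a b -> wstarB (lift k a) (lift k b).
Proof.
  induction 1.
  - destruct H as [H|H].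
    + destruct (wstep_lift k H) as [c [h1 h2]].
      eapply rt_trans; apply rt_step; [left; exact h1| right; exact h2].
    + apply rt_step; right. apply lift_resp. assumption.
  - apply rt_refl.
  - eapply rt_trans; eassumption.
Qed.

Lemma wstarB_appl a b x : wstarB a b -> wstarB (App a x) (App b x).
Proof.
  induction 1.
  - destruct H as [H|H]; apply rt_step; [left; constructor; exact H| right; constructor; [exact H| apply bis_refl]].
  - apply rt_refl.
  - eapply rt_trans; eassumption.
Qed.

CoInductive SR : term -> term -> Prop :=
| sr_var t n : wstarB t (Var n) -> SR t (Var n)
| sr_cst t c : wstarB t (Cst c) -> SR t (Cst c)
| sr_app t a b a' b' : wstarB t (App a b) -> SR a a' -> SR b b' -> SR t (App a' b')
| sr_lam t a a' : wstarB t (Lam a) -> SR a a' -> SR t (Lam a').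

Lemma SR_refl : forall t, SR t t.
Proof. cofix H. intro t; destruct t; econstructor; try apply rt_refl; apply H. Qed.

Lemma SR_pre t t1 v : wstarB t t1 -> SR t1 v -> SR t v.
Proof. intros h1 h2. destruct h2; econstructor; try (eapply rt_trans; eassumption); eassumption. Qed.

Lemma SR_lift : forall a b k, SR a b -> SR (lift k a) (lift k b).
Proof.
  cofix H. intros a0 b0 k h. destruct h.
  - rewrite lift_var. constructor. rewrite <- lift_var. apply wstarB_lift; assumption.
  - rewrite lift_cst. constructor. rewrite <- (lift_cst k c). apply wstarB_lift; assumption.
  - rewrite lift_app. eapply sr_app. rewrite <- lift_app. apply wstarB_lift; eassumption.
    apply H; assumption. apply H; assumption.
  - rewrite lift_lam. eapply sr_lam. rewrite <- lift_lam. apply wstarB_lift; eassumption.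
    apply H; assumption.
Qed.

Lemma SR_subst : forall a b s s', SR a b -> (forall n, SR (s n) (s' n)) -> SR (subst s a) (subst s' b).
Proof.
  cofix H. intros a0 b0 s s' h hs. destruct h.
  - rewrite subst_var. apply SR_pre with (subst s (Var n)).
    apply wstarB_subst; assumption. rewrite subst_var. apply hs.
  - rewrite subst_cst. constructor. rewrite <- (subst_cst s c). apply wstarB_subst; assumption.
  - rewrite subst_app. eapply sr_app. rewrite <- subst_app. apply wstarB_subst; eassumption.
    apply H; assumption. apply H; assumption.
  - rewrite subst_lam. eapply sr_lam. rewrite <- subst_lam. apply wstarB_subst; eassumption.
    apply H. assumption. intros [|n]; simpl. apply SR_refl. apply SR_lift, hs.
Qed.

Lemma SR_beta u v : beta u v -> forall t, SR t u -> SR t v.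
Proof.
  induction 1; intros t h.
  - inversion h; subst. inversion H3; subst.
    apply SR_pre with (subst0 b a0).
    + eapply rt_trans. eassumption. eapply rt_trans. apply wstarB_appl. eassumption.
      apply rt_step. left. constructor.
    + unfold subst0. apply SR_subst. assumption. intros [|n]; simpl. assumption. apply SR_refl.
  - inversion h; subst. eapply sr_app; eauto.
  - inversion h; subst. eapply sr_app; eauto.
  - inversion h; subst. eapply sr_lam; eauto.
Qed.

Lemma SR_beta_star t u : beta_star t u -> SR t u.
Proof.
  intro h. apply clos_rt_rtn1_iff in h. induction h.
  - apply SR_refl.
  - eapply SR_beta; eassumption.
Qed.


Variable bot : C.

Definition hb a b := hstep a b \/ bis a b.
Definition hstarB := clos_refl_trans term hb.

Lemma wstarB_hstarB a b : wstarB a b -> hstarB a b.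
Proof.
  induction 1. destruct H; apply rt_step; [left; constructor; assumption| right; assumption].
  apply rt_refl. eapply rt_trans; eassumption.
Qed.

Lemma hstarB_lam a b : hstarB a b -> hstarB (Lam a) (Lam b).
Proof.
  induction 1. destruct H; apply rt_step; [left; apply hstep_lam; assumption| right; constructor; assumption].
  apply rt_refl. eapply rt_trans; eassumption.
Qed.

Lemma apps_snoc a ts b : apps a (ts ++ [b]) = App (apps a ts) b.
Proof. revert a; induction ts; intro a0; simpl; auto. Qed.

Lemma SR_spine u : spine bot u -> forall t, SR t u ->
  exists a ts, is_atom a /\ a <> Cst bot /\ wstarB t (apps a ts).
Proof.
  induction 1; intros t0 h; inversion h; subst.
  - exists (Var n), []. simpl. split; [exact I|]. split; [discriminate| assumption].
  - exists (Cst c), []. simpl. split; [exact I|]. split; [intro e; injection e; auto| assumption].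
  - destruct (IHspine _ H4) as [a0 [ts [h1 [h2 h3]]]].
    exists a0, (ts ++ [b]). split; auto. split; auto. rewrite apps_snoc.
    eapply rt_trans. eassumption. apply wstarB_appl. assumption.
Qed.

Lemma SR_hnf u : hnf bot u -> forall t, SR t u ->
  exists n a ts, is_atom a /\ a <> Cst bot /\ hstarB t (lams n (apps a ts)).
Proof.
  induction 1; intros t0 h.
  - destruct (SR_spine H h) as [a [ts [h1 [h2 h3]]]]. exists 0, a, ts. simpl.
    split; auto. split; auto. apply wstarB_hstarB; assumption.
  - inversion h as [| | |? a1 ? hw hs0]; subst. destruct (IHhnf _ hs0) as [n [a0 [ts [h1 [h2 h3]]]]].
    exists (S n), a0, ts. split; auto. split; auto. simpl.
    eapply rt_trans. apply wstarB_hstarB; exact hw. apply hstarB_lam; assumption.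
Qed.

Lemma bis_wstep a b c : bis a b -> wstep b c -> exists c', wstep a c' /\ bis c' c.
Proof.
  intros h1 h2. revert a h1. induction h2; intros a0 h.
  - inversion h; subst. inversion H2; subst. eexists; split. constructor.
    unfold subst0. apply subst_resp. assumption. intros [|n]; simpl. assumption. apply bis_refl.
  - inversion h; subst. destruct (IHh2 _ H2) as [c' [h3 h4]]. eexists; split.
    apply wstep_app; eassumption. constructor; assumption.
Qed.

Lemma bis_hstep a b c : bis a b -> hstep b c -> exists c', hstep a c' /\ bis c' c.
Proof.
  intros h1 h2. revert a h1. induction h2; intros a0 h.
  - destruct (bis_wstep h H) as [c' [h3 h4]]. exists c'; split; auto. constructor; assumption.
  - inversion h; subst. destruct (IHh2 _ H1) as [c' [h3 h4]]. eexists; split.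
    apply hstep_lam; eassumption. constructor; assumption.
Qed.

Lemma bis_hstar a b c : hstar b c -> bis a b -> exists c', hstar a c' /\ bis c' c.
Proof.
  intro h. apply clos_rt_rt1n_iff in h. revert a. induction h; intros a0 hb0.
  - exists a0; split; auto. apply rt_refl.
  - destruct (bis_hstep hb0 H) as [c' [h3 h4]]. destruct (IHh _ h4) as [d [h5 h6]].
    exists d; split; auto. eapply rt_trans. apply rt_step; eassumption. assumption.
Qed.

Lemma hstarB_hstar t X : hstarB t X -> exists Y, hstar t Y /\ bis Y X.
Proof.
  intro h. apply clos_rt_rt1n_iff in h. induction h.
  - exists x; split. apply rt_refl. apply bis_refl.
  - destruct IHh as [Y [h1 h2]]. destruct H as [H|H].
    + exists Y; split; auto. eapply rt_trans. apply rt_step; eassumption. assumption.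
    + destruct (bis_hstar h1 H) as [Z [h3 h4]]. exists Z; split; auto. eapply bis_trans; eassumption.
Qed.

Lemma bis_apps : forall ts a Y, bis Y (apps a ts) -> exists a' ts', Y = apps a' ts' /\ bis a' a.
Proof.
  induction ts; intros a0 Y h; simpl in h.
  - exists Y, []; auto.
  - destruct (IHts _ _ h) as [a1 [ts1 [e hb1]]]. inversion hb1; subst.
    exists a2, (b :: ts1). simpl. auto.
Qed.

Lemma bis_lams_apps n a ts Y : is_atom a -> bis Y (lams n (apps a ts)) -> exists ts', Y = lams n (apps a ts').
Proof.
  intro ha. revert Y. induction n; intros Y h; simpl in *.
  - destruct (bis_apps _ _ h) as [a' [ts' [e hb]]]. exists ts'. subst.
    destruct a; try contradiction; inversion hb; subst; reflexivity.
  - inversion h; subst. destruct (IHn _ H1) as [ts' e]. exists ts'. subst. reflexivity.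
Qed.

Definition hnorm t := exists n a ts, is_atom a /\ a <> Cst bot /\ hstar t (lams n (apps a ts)).

Lemma has_hnf_hnorm t : has_hnf bot t -> hnorm t.
Proof.
  intros [u [h1 h2]]. destruct (SR_hnf h2 (SR_beta_star h1)) as [n [a [ts [ha [hn hs]]]]].
  destruct (hstarB_hstar hs) as [Y [h3 h4]].
  edestruct bis_lams_apps as [ts' e]; [exact ha| exact h4|]. subst. exists n, a, ts'. auto.
Qed.



Definition spec t (p : nat * term * list term) : Prop :=
  let '(n, a, ts) := p in is_atom a /\ a <> Cst bot /\ hstar t (lams n (apps a ts)).

Definition choose t : option (nat * term * list term) :=
  match excluded_middle_informative (hnorm t) with
  | left h => Some (proj1_sig (constructive_indefinite_description (spec t)
                     (match h with ex_intro _ n (ex_intro _ a (ex_intro _ ts H)) =>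
                        ex_intro _ (n, a, ts) H end)))
  | right _ => None
  end.

Lemma choose_spec t : match choose t with Some p => spec t p | None => ~ hnorm t end.
Proof.
  unfold choose. destruct (excluded_middle_informative (hnorm t)). apply proj2_sig. assumption.
Qed.

Inductive st := NF (t : term) | LM (m : nat) (a : term) (ts : list term) | AP (a : term) (rts : list term).

CoFixpoint gen (x : st) : term :=
  match x with
  | NF t => match choose t with
            | None => Cst bot
            | Some (n, a, ts) => match n with
                                 | S m => Lam (gen (LM m a ts))
                                 | 0 => match rev ts with [] => a | u :: us => App (gen (AP a us)) (gen (NF u)) end
                                 end
            end
  | LM m a ts => match m with
                 | S m' => Lam (gen (LM m' a ts))
                 | 0 => match rev ts with [] => a | u :: us => App (gen (AP a us)) (gen (NF u)) end
                 end
  | AP a rts => match rts with [] => a | u :: us => App (gen (AP a us)) (gen (NF u)) end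
  end.

Definition gf u := gen (NF u).

Lemma gen_AP a rts : gen (AP a rts) = apps a (rev (map gf rts)).
Proof.
  induction rts as [|u us IH]; simpl.
  - rewrite (frob_eq (gen (AP a []))). simpl. symmetry. apply frob_eq.
  - rewrite (frob_eq (gen (AP a (u :: us)))). simpl. rewrite IH, apps_snoc. reflexivity.
Qed.

Lemma gen_LM m a ts : gen (LM m a ts) = lams m (apps a (map gf ts)).
Proof.
  induction m as [|m IH]; simpl.
  - transitivity (gen (AP a (rev ts))).
    + rewrite (frob_eq (gen (LM 0 a ts))), (frob_eq (gen (AP a (rev ts)))). reflexivity.
    + rewrite gen_AP, map_rev, rev_involutive. reflexivity.
  - rewrite (frob_eq (gen (LM (S m) a ts))). simpl. rewrite IH. reflexivity.
Qed.

Lemma gen_NF t : match choose t with Some (n, a, ts) => gen (NF t) = lams n (apps a (map gf ts))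
                 | None => gen (NF t) = Cst bot end.
Proof.
  destruct (choose t) as [[[n a] ts]|] eqn:E.
  - rewrite <- gen_LM. rewrite (frob_eq (gen (NF t))), (frob_eq (gen (LM n a ts))).
    simpl. rewrite E. reflexivity.
  - rewrite (frob_eq (gen (NF t))). simpl. rewrite E. reflexivity.
Qed.

Lemma gen_inf : forall t, infN bot t (gen (NF t)).
Proof.
  cofix H. intro t. pose proof (choose_spec t) as hs. pose proof (gen_NF t) as hg.
  destruct (choose t) as [[[n a] ts]|].
  - rewrite hg. destruct hs as [h1 [h2 h3]]. apply infN_hnf with (ts := ts); auto.
    + rewrite length_map. reflexivity.
    + intros i hi. rewrite (nth_indep (map gf ts) (Cst bot) (gf (Cst bot))) by (rewrite length_map; exact hi).
      rewrite map_nth. apply H.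
  - rewrite hg. apply infN_bot. intro hh. apply hs. apply has_hnf_hnorm. exact hh.
Qed.

End S.

Theorem lemma5p37 (C : Type) (bot : C) (t : term C) :
  exists s : term C, infN bot t s.
Proof. exists (gen bot (NF t)). apply gen_inf. Qed.
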